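(* For $\lambda=(\lambda_1,\dots,\lambda_l)\in\mathscr{P}^n_C$ (with $l\ge1$), writing $x_\lambda=v(\lambda)t_{-\xi(\lambda)}$ with $v(\lambda)\in W$, $\xi(\lambda)\in Q^\vee$, we have $$v(\lambda)=v_{\lambda_l}\cdots v_{\lambda_2}v_{\lambda_1},\qquad \xi(\lambda)=\varepsilon_1+v_{\lambda_1}^{-1}\varepsilon_1+v_{\lambda_1}^{-1}v_{\lambda_2}^{-1}\varepsilon_1+\cdots+v_{\lambda_1}^{-1}\cdots v_{\lambda_{l-1}}^{-1}\varepsilon_1.$$
   Context: $W_{\mathrm{af}}$ is the affine Weyl group of type $C_n^{(1)}$ generated by $s_0,\dots,s_n$; $W=\langle s_1,\dots,s_n\rangle$ acts on $X^\vee=\bigoplus_{i=1}^n\mathbb{Z}\varepsilon_i$ by: $s_i$ ($1\le i\le n-1$) swaps $\varepsilon_i,\varepsilon_{i+1}$; $s_n$ negates $\varepsilon_n$. $Q^\vee=\bigoplus\mathbb{Z}\alpha_i^\vee$, $\alpha_i^\vee=\varepsilon_i-\varepsilon_{i+1}$ ($i<n$), $\alpha_n^\vee=\varepsilon_n$. $W_{\mathrm{af}}\cong W\ltimes Q^\vee$, elements $wt_\xi$ with $wt_\xi w^{-1}=t_{w\xi}$, and $s_0=s_\theta t_{-\varepsilon_1}$ where $s_\theta=s_1\cdots s_{n-1}s_ns_{n-1}\cdots s_1$. Define $\rho_i=s_{i-1}\cdots s_1s_0$ ($1\le i\le n$), $\rho_i=s_{2n-i+1}\cdots s_{n-1}s_ns_{n-1}\cdots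 s_1s_0$ ($n+1\le i\le 2n$); $v_i=s_i\cdots s_{n-1}s_ns_{n-1}\cdots s_1$ ($1\le i\le n$), $v_i=s_{2n-i}\cdots s_2s_1$ ($n+1\le i\le 2n-1$), $v_{2n}=1$. $\mathscr{P}^n_C$ is the set of partitions $\lambda=(\lambda_1\ge\dots\ge\lambda_l>0)$ with $\lambda_1\le 2n$ such that $\lambda_k<n\Rightarrow\lambda_k>\lambda_{k+1}$ (with $\lambda_{l+1}=0$), and $x_\lambda=\rho_{\lambda_l}\cdots\rho_{\lambda_1}$. *)

(* Defs.v *)
(* Model of the affine Weyl group of type C_n^(1) as W ⋉ Q^vee,
   with W realised as signed permutation matrices acting on X^vee = Z^n
   (column vectors; coordinate j : 'I_n corresponds to epsilon_{j+1}). *)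
From mathcomp Require Import all_boot all_order all_algebra.
Set Implicit Arguments. Unset Strict Implicit. Unset Printing Implicit Defensive.
Import Order.TTheory GRing.Theory Num.Theory.
Local Open Scope ring_scope.

Definition eps (n k : nat) : 'cV[int]_n := \col_(a < n) ((a.+1 == k)%N)%:R.

(* matrix of the simple reflection s_i of W, 1 <= i <= n, acting on X^vee:
   s_i (i<n) swaps eps_i, eps_{i+1}; s_n negates eps_n.
   Entry (a,b) is the coefficient of eps_{a+1} in s_i eps_{b+1}. *)
Definition smat (n i : nat) : 'M[int]_n :=
  \matrix_(a < n, b < n)
    (if (i < n)%N then
       (if a.+1 == i then ((b.+1 == i.+1)%N)%:R
        else if a.+1 == i.+1 then ((b.+1 == i)%N)%:R
        else ((a == b :> nat))%:R)
     else
       (if (a == b :> nat) then (if a.+1 == n then -1 else 1) else 0)).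

Definition wmat (n : nat) (w : seq nat) : 'M[int]_n :=
  foldr (fun i acc => smat n i *m acc) 1%:M w.

Definition stheta (n : nat) : 'M[int]_n :=
  wmat n (iota 1 n.-1 ++ [:: n] ++ rev (iota 1 n.-1)).

(* Elements of W_af = W ⋉ Q^vee: the pair (w, xi) stands for w t_xi.
   (Q^vee = Z^n in type C.) *)
Definition waf (n : nat) := ('M[int]_n * 'cV[int]_n)%type.

Definition waf_one (n : nat) : waf n := (1%:M, 0).

(* (w t_xi)(w' t_xi') = w w' t_{w'^{-1} xi + xi'}, using t_xi w' = w' t_{w'^{-1} xi} *)
Definition waf_mul (n : nat) (x y : waf n) : waf n :=
  (x.1 *m y.1, invmx y.1 *m x.2 + y.2).

Definition gen (n i : nat) : waf n :=
  if i == 0%N then (stheta n, - eps n 1) else (smat n i, 0).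

Definition wafword (n : nat) (w : seq nat) : waf n :=
  foldr (fun i acc => waf_mul (gen n i) acc) (waf_one n) w.

Definition rho_word (n i : nat) : seq nat :=
  if (i <= n)%N then rev (iota 0 i)
  else iota (2 * n - i + 1) (i - n - 1) ++ [:: n] ++ rev (iota 1 n.-1) ++ [:: 0%N].
     (* s_{2n-i+1} ... s_{n-1} s_n s_{n-1} ... s_1 s_0 *)

Definition rho (n i : nat) : waf n := wafword n (rho_word n i).

Definition v_word (n i : nat) : seq nat :=
  if (i <= n)%N then iota i (n - i) ++ [:: n] ++ rev (iota 1 n.-1)
                                      (* s_i ... s_{n-1} s_n s_{n-1} ... s_1 *)
  else rev (iota 1 (2 * n - i)).      (* s_{2n-i} ... s_1 ; empty for i = 2n *)

Definition vmat (n i : nat) : 'M[int]_n := wmat n (v_word n i).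

(* the set P^n_C, partitions given as the list [lambda_1; ...; lambda_l] *)
Definition is_PC (n : nat) (lam : seq nat) : bool :=
  [&& sorted geq lam, all (fun a => 0 < a)%N lam, all (fun a => a <= 2 * n)%N lam &
      [forall k : 'I_(size lam),
         (nth 0 lam k < n)%N ==> (nth 0 lam k.+1 < nth 0 lam k)%N]].

Definition x_lam (n : nat) (lam : seq nat) : waf n :=
  foldr (fun a acc => waf_mul (rho n a) acc) (waf_one n) (rev lam).

Definition v_lam (n : nat) (lam : seq nat) : 'M[int]_n :=
  foldr (fun a acc => vmat n a *m acc) 1%:M (rev lam).

Definition vinv_prod (n : nat) (s : seq nat) : 'M[int]_n :=
  foldr (fun a acc => invmx (vmat n a) *m acc) 1%:M s.

Definition xi_lam (n : nat) (lam : seq nat) : 'cV[int]_n :=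
  \sum_(k < size lam) vinv_prod n (take k lam) *m eps n 1.

(* Main.v *)
Require Import Defs.
From mathcomp Require Import all_boot all_order all_algebra all_fingroup zify.
Import GRing.Theory.
Local Open Scope ring_scope.
Lemma smat_perm n i (h1 : (0 < i)%N) (h2 : (i < n)%N) :
  smat n i = perm_mx (tperm (Ordinal (leq_ltn_trans (leq_pred i) h2)) (Ordinal h2)).
Proof.
apply/matrixP => a b; rewrite /smat /perm_mx !mxE h2.
case: tpermP => [->|->|ne1 ne2] /=; rewrite -?(inj_eq val_inj) /=.
- have -> : (Nat.pred i).+1 = i by lia.
  by rewrite eqxx eqSS eq_sym.
- have -> : (i.+1 == i) = false by lia.
  by rewrite eqxx; congr (_%:R); apply/eqP/eqP; lia.
- have e1 : (a.+1 == i) = false by apply/eqP => e; apply: ne1; apply: val_inj => /=; lia.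
  have e2 : (a.+1 == i.+1) = false by apply/eqP => e; apply: ne2; apply: val_inj => /=; lia.
  by rewrite e1 e2.
Qed.

Lemma smat_diag n : smat n n = diag_mx (\row_(a < n) (if a.+1 == n then -1 else 1)).
Proof.
apply/matrixP => a b; rewrite /smat !mxE ltnn.
by rewrite -(inj_eq val_inj); case: (a == b :> nat); rewrite ?mulr1n ?mulr0n.
Qed.

Lemma smatK n i : (0 < i <= n)%N -> smat n i *m smat n i = 1%:M.
Proof.
case/andP => h1; rewrite leq_eqVlt => /orP [/eqP -> | h2].
  rewrite smat_diag mulmx_diag -diag_const_mx; congr diag_mx.
  by apply/matrixP => a b; rewrite !mxE; case: ifP; rewrite ?mulrNN mulr1.
by rewrite smat_perm // -perm_mxM tperm2 perm_mx1.
Qed.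

Definition good n (w : seq nat) := all (fun j => (0 < j <= n)%N) w.

Lemma wmat_cat n a b : wmat n (a ++ b) = wmat n a *m wmat n b.
Proof.
elim: a => [|x a IH] /=; first by rewrite mul1mx.
by rewrite /wmat /= -/(wmat n (a ++ b)) IH mulmxA.
Qed.

Lemma wmat1 n x : wmat n [:: x] = smat n x.
Proof. by rewrite /wmat /= mulmx1. Qed.

Lemma wmat_revK n w : good n w -> wmat n (rev w) *m wmat n w = 1%:M.
Proof.
elim: w => [|x w IH] /=; first by rewrite mul1mx.
case/andP => hx hw.
rewrite rev_cons -cats1 wmat_cat wmat1 /wmat /= -/(wmat n w).
by rewrite -mulmxA (mulmxA (smat n x)) smatK // mul1mx IH.
Qed.

Lemma wmat_revK' n w : good n w -> wmat n w *m wmat n (rev w) = 1%:M.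
Proof.
move=> h; rewrite -{1}(revK w) wmat_revK //.
by rewrite /good all_rev.
Qed.

Lemma wmat_revKl n w (Y : 'M_n) : good n w -> wmat n (rev w) *m (wmat n w *m Y) = Y.
Proof. by move=> h; rewrite mulmxA wmat_revK // mul1mx. Qed.

Lemma wmat_revKl' n w (Y : 'M_n) : good n w -> wmat n w *m (wmat n (rev w) *m Y) = Y.
Proof. by move=> h; rewrite mulmxA wmat_revK' // mul1mx. Qed.

Lemma wmat_unit n w : good n w -> wmat n w \in unitmx.
Proof. by move=> h; case: (mulmx1_unit (@wmat_revK' n w h)). Qed.

Lemma wafword0 n w : all (fun j => j != 0%N) w ->
  wafword n (w ++ [:: 0%N]) = (wmat n w *m stheta n, - eps n 1).
Proof.
elim: w => [|x w IH] /=.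
  by move=> _; rewrite /wafword /= /waf_mul /gen /= /waf_one /= mulmx1 mul1mx invmx1 mul1mx addr0.
case/andP => hx hw.
rewrite -/(wafword n (w ++ [:: 0%N])) IH // /waf_mul /gen (negPf hx) /=.
by rewrite mulmx0 add0r mulmxA.
Qed.

Lemma good_iota n a k : (0 < a)%N -> (a + k <= n.+1)%N -> good n (iota a k).
Proof.
move=> h1 h2; apply/allP => x; rewrite mem_iota => /andP [hx1 hx2].
apply/andP; split; lia.
Qed.

Lemma all_ne0 n w : good n w -> all (fun j => j != 0%N) w.
Proof. by apply: sub_all => x /andP [h _]; rewrite -lt0n. Qed.

Lemma rho_v n i : (1 <= n)%N -> (0 < i <= 2 * n)%N -> rho n i = (vmat n i, - eps n 1).
Proof.
move=> hn /andP [hi1 hi2].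
rewrite /rho /vmat /rho_word /v_word.
case: ifP => hin.
  case: i hi1 hi2 hin => // j _ _ hj.
  rewrite (_ : rev (iota 0 j.+1) = rev (iota 1 j) ++ [:: 0%N]); last first.
    by rewrite /= rev_cons cats1.
  rewrite wafword0; last by apply: (@all_ne0 n); rewrite /good all_rev; apply: good_iota; lia.
  congr (_, _).
  rewrite /stheta (_ : n.-1 = (j + (n - j.+1))%N); last lia.
  rewrite iotaD !wmat_cat -!mulmxA wmat_revKl; last by apply: good_iota; lia.
  by rewrite add1n.
set k := (2 * n - i)%N.
rewrite (_ : iota (2 * n - i + 1) (i - n - 1) ++ [:: n] ++ rev (iota 1 n.-1) ++ [:: 0%N]
   = (iota (1 + k) (n.-1 - k) ++ [:: n] ++ rev (iota 1 n.-1)) ++ [:: 0%N]); last first.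
  by rewrite -!catA /k; do 2 f_equal; lia.
rewrite wafword0; last first.
  rewrite !all_cat /= andbT; apply/andP; split; first by apply: (@all_ne0 n); apply: good_iota; lia.
  apply/andP; split; first lia.
  by apply: (@all_ne0 n); rewrite /good all_rev; apply: good_iota; lia.
congr (_, _).
have gI1 : good n (iota 1 k) by apply: good_iota; lia.
have gA : good n (iota (1 + k) (n.-1 - k)) by apply: good_iota; lia.
have gn : good n [:: n] by rewrite /good /= andbT; lia.
rewrite /stheta (_ : iota 1 n.-1 = iota 1 k ++ iota (1 + k) (n.-1-k)); last first.
  by rewrite -iotaD; f_equal; rewrite /k; lia.
rewrite rev_cat !wmat_cat wmat1 -!mulmxA.
rewrite (@wmat_revKl n _ _ gI1) (@wmat_revKl n _ _ gA) (mulmxA (smat n n)) smatK; last lia.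
by rewrite mul1mx wmat_revKl'.
Qed.

Lemma invmxM n (A B : 'M[int]_n) : A \in unitmx -> B \in unitmx ->
  invmx (A *m B) = invmx B *m invmx A.
Proof.
move=> uA uB; have uAB : A *m B \in unitmx by rewrite unitmx_mul uA uB.
have e : A *m B *m (invmx B *m invmx A) = 1%:M.
  by rewrite mulmxA mulmxK // mulmxV.
by rewrite -[LHS]mulmx1 -e mulmxA mulVmx // mul1mx.
Qed.

Lemma vmat_unit n i : (1 <= n)%N -> (0 < i)%N -> vmat n i \in unitmx.
Proof.
move=> hn hi; rewrite /vmat; apply: wmat_unit; rewrite /v_word; case: ifP => h.
  rewrite /good !all_cat /= andbT; apply/and3P; split.
  - apply/allP => x; rewrite mem_iota => /andP [h1 h2]; apply/andP; split; lia.
  - lia.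
  - rewrite all_rev; apply/allP => x; rewrite mem_iota => /andP [h1 h2]; apply/andP; split; lia.
rewrite /good all_rev; apply/allP => x; rewrite mem_iota => /andP [h1 h2]; apply/andP; split; lia.
Qed.

Lemma v_lam_rcons n lam a : v_lam n (rcons lam a) = vmat n a *m v_lam n lam.
Proof. by rewrite /v_lam rev_rcons. Qed.

Lemma v_lam_unit n lam : (1 <= n)%N -> all (fun a => 0 < a)%N lam -> v_lam n lam \in unitmx.
Proof.
move=> hn; elim/last_ind: lam => [|lam a IH]; first by rewrite /v_lam /= unitmx1.
rewrite all_rcons => /andP [ha hl].
by rewrite v_lam_rcons unitmx_mul vmat_unit // IH.
Qed.

Lemma vinv_prod_rcons n lam a : vinv_prod n (rcons lam a) = vinv_prod n lam *m invmx (vmat n a).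
Proof.
elim: lam => [|x lam IH] /=; first by rewrite /vinv_prod /= mul1mx mulmx1.
by rewrite /vinv_prod /= -/(vinv_prod n (rcons lam a)) IH mulmxA.
Qed.

Lemma inv_v_lam n lam : (1 <= n)%N -> all (fun a => 0 < a)%N lam -> invmx (v_lam n lam) = vinv_prod n lam.
Proof.
move=> hn; elim/last_ind: lam => [|lam a IH]; first by rewrite /v_lam /vinv_prod /= invmx1.
rewrite all_rcons => /andP [ha hl].
rewrite v_lam_rcons invmxM; last by apply: v_lam_unit. 2: by apply: vmat_unit.
by rewrite (IH hl) vinv_prod_rcons.
Qed.

Lemma xi_lam_rcons n lam a : xi_lam n (rcons lam a) = xi_lam n lam + vinv_prod n lam *m eps n 1.
Proof.
rewrite /xi_lam size_rcons big_ord_recr /=; congr (_ + _).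
  apply: eq_bigr => k _; rewrite -cats1 takel_cat //; exact: ltnW.
by rewrite -cats1 takel_cat // take_size.
Qed.

Lemma x_lam_rcons n lam a : x_lam n (rcons lam a) = waf_mul (rho n a) (x_lam n lam).
Proof. by rewrite /x_lam rev_rcons. Qed.

Lemma main n lam : (1 <= n)%N -> all (fun a => (0 < a <= 2 * n)%N) lam ->
  x_lam n lam = (v_lam n lam, - xi_lam n lam).
Proof.
move=> hn; elim/last_ind: lam => [|lam a IH].
  by rewrite /x_lam /v_lam /xi_lam /= big_ord0 oppr0.
rewrite all_rcons => /andP [ha hl].
rewrite x_lam_rcons IH // rho_v // /waf_mul /= v_lam_rcons xi_lam_rcons.
have hl' : all (fun a => 0 < a)%N lam by apply: sub_all hl => x /andP [].
by rewrite inv_v_lam // mulmxN opprD addrC.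
Qed.

Theorem proposition3p2 (n : nat) (lam : seq nat) :
  (1 <= n)%N -> is_PC n lam -> (1 <= size lam)%N ->
  x_lam n lam = (v_lam n lam, - xi_lam n lam).
Proof.
move=> hn /and4P [_ h1 h2 _] _; apply: main => //.
apply/allP => x hx; rewrite (allP h1 x hx) (allP h2 x hx) //.
Qed.
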